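(* Let $\alpha\in\mathbb{C}$, $s\in\mathbb{C}\setminus\{0\}$, and for index $n$ consider the discrete system for $(f_n,g_n)$ \[ f_{n+1}f_n=\frac{g_n^2-(\alpha+2n)g_n+(\alpha+n)n}{g_n^2},\qquad g_{n-1}+g_n=\frac{(1-\alpha+s-2n)f_n+\alpha+2n+1}{(f_n-1)^2}, \] together with the differential system in $s$ \[ \frac{df}{ds}=\frac{2f^2g-4fg+(\alpha-s+2n)f+2g-\alpha-2n}{s},\qquad \frac{dg}{ds}=\frac{g^2(1-f^2)-(\alpha+2n)g+(\alpha+n)n}{sf}. \] Define the birational change of variables and parameter identification \[ q=\frac{(f-1)(fg-g+n)}{sf},\qquad p=\frac{s(g-n)}{fg-g+n},\qquad t=s, \] \[ a_0=\alpha+n,\quad a_1=-n,\quad a_2=n,\quad a_3=1-\alpha-n \] (so that $a_1+a_2=0$). Then this change of variables simultaneously transforms the discrete system into the special case $a_1+a_2=0$ of the discrete Painlev\'e equation \[ q_{n+1}=1-q_n-\frac{a_0}{p_n+t}-\frac{a_2}{p_n},\qquad p_{n-1}=-p_n-t+\frac{a_1}{q_n}+\frac{a_3}{q_n-1}, \] with parameter evolution $n\mapsto n+1$ given by $(a_0,a_1,a_2,a_3)\mapsto(a_0+1,a_1-1,a_2+1,a_3-1)$, and transforms the differential system into the Hamiltonian system \[ \frac{dq}{dt}=\frac{1}{t}\Big(q(q-1)(2p+t)-a_1(q-1)-a_3q\Big),\qquad \frac{dp}{dt}=\frac{1}{t}\Big(p(p+t)(1-2q)+(a_1+a_3)p-a_2t\Big).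 \]
   Context: The discrete system arises from ladder operators for polynomials orthogonal with respect to the Laguerre weight $x^\alpha e^{-x}$ on $[0,s]$. The Hamiltonian system is a Hamiltonian form of the fifth Painlev\'e equation, with parameters normalised by $a_0+a_1+a_2+a_3=1$. *)

(* Defs.v *)
From mathcomp Require Import all_boot all_algebra.
From mathcomp Require Import all_classical all_reals all_analysis.
From mathcomp Require Import complex.
Import GRing.Theory Num.Theory numFieldNormedType.Exports.
Local Open Scope ring_scope.

(* The complex numbers, seen as a numFieldType (hence a normed module over
   itself, so that derivatives are complex derivatives). *)
Definition Cp (R : realType) : numFieldType := R[i].

Section Defs.
Variable R : realType.
Local Notation C := (Cp R).

Definition qv (n : nat) (s f g : C) : C :=
  (f - 1) * (f * g - g + n%:R) / (s * f).
Definition pv (n : nat) (s f g : C) : C :=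
  s * (g - n%:R) / (f * g - g + n%:R).

Definition a0 (alpha : C) (n : nat) : C := alpha + n%:R.
Definition a1 (n : nat) : C := - n%:R.
Definition a2 (n : nat) : C := n%:R.
Definition a3 (alpha : C) (n : nat) : C := 1 - alpha - n%:R.
End Defs.
Arguments qv {R}.
Arguments pv {R}.
Arguments a0 {R}.
Arguments a1 {R}.
Arguments a2 {R}.
Arguments a3 {R}.

(* Main.v *)
Require Import Defs.
From mathcomp Require Import all_boot all_algebra.
From mathcomp Require Import all_classical all_reals all_analysis.
From mathcomp Require Import complex.
From mathcomp Require Import ring lra.
Import GRing.Theory Num.Theory numFieldNormedType.Exports.
Local Open Scope ring_scope.


Lemma fwd (K : fieldType) (a s m F0 G0 F1 G1 : K) :
  s != 0 -> F0 != 0 -> G0 != 0 -> F1 != 0 -> F1 != 1 ->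
  F0*G0 - G0 + m != 0 ->
  s * (G0 - m) / (F0*G0 - G0 + m) != 0 ->
  s * (G0 - m) / (F0*G0 - G0 + m) + s != 0 ->
  F1 * F0 = (G0^+2 - (a + 2* m)*G0 + (a+m)* m) / G0^+2 ->
  G0 + G1 = ((1 - a + s - 2* (m+1)) * F1 + a + 2* (m+1) - 1) / (F1 - 1)^+2 ->
  (F1 - 1) * (F1 * G1 - G1 + (m+1)) / (s * F1) =
  1 - (F0 - 1) * (F0 * G0 - G0 + m) / (s * F0) - (a + m) / (s * (G0 - m) / (F0*G0 - G0 + m) + s)
   - m / (s * (G0 - m) / (F0*G0 - G0 + m)).
Proof.
move=> s0 F00 G00 F10 F11 D0 P0 Ps0 h1 h2.
have eG1 : G1 = ((1 - a + s - 2* (m+1)) * F1 + a + 2* (m+1) - 1) / (F1 - 1)^+2 - G0.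
  by rewrite -h2 addrC addKr.
have eF1 : F1 = (G0^+2 - (a + 2* m)*G0 + (a+m)* m) / G0^+2 / F0.
  by rewrite -h1 mulfK.
have hGm : G0 - m != 0.
  by move: P0; apply: contra => /eqP ->; rewrite mulr0 mul0r.
have hPs : s * (G0 - m) + s * (F0 * G0 - G0 + m) != 0.
  move: Ps0; apply: contra => /eqP h.
  have -> : s * (G0 - m) / (F0*G0 - G0 + m) + s = (s * (G0 - m) + s * (F0 * G0 - G0 + m)) / (F0*G0 - G0 + m) by field.
  by rewrite h mul0r.
have hE : G0 ^+ 2 - (a + 2 * m) * G0 + (a + m) * m = F1 * F0 * G0 ^+ 2.
  by rewrite h1 divfK // expf_neq0.
have hE0 : G0 ^+ 2 - (a + 2 * m) * G0 + (a + m) * m != 0.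
  by rewrite hE !mulf_neq0 // expf_neq0.
have hE1 : G0 ^+ 2 - (a + 2 * m) * G0 + (a + m) * m + -1 * (G0 ^+ 2 * F0) != 0.
  have -> : G0 ^+ 2 - (a + 2 * m) * G0 + (a + m) * m + -1 * (G0 ^+ 2 * F0) = (F1 - 1) * F0 * G0 ^+ 2.
    by rewrite hE; ring.
  by rewrite !mulf_neq0 ?subr_eq0 // expf_neq0.
rewrite eG1 eF1.
field.
by rewrite D0 hGm s0 hPs F00 G00 hE0 hE1.
Qed.

Lemma neq0_eq (K : fieldType) (x y : K) : y != 0 -> x = y -> x != 0.
Proof. by move=> h ->. Qed.

Lemma bwd (K : fieldType) (a s k F G Fm Gm : K) :
  s != 0 -> F != 0 -> F != 1 -> Fm != 0 -> Gm != 0 -> G != 0 ->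
  F * G - G + (k + 1) != 0 -> Fm * Gm - Gm + k != 0 ->
  (F - 1) * (F * G - G + (k + 1)) / (s * F) != 0 ->
  (F - 1) * (F * G - G + (k + 1)) / (s * F) != 1 ->
  F * Fm = (Gm^+2 - (a + 2 * k) * Gm + (a + k) * k) / Gm^+2 ->
  Gm + G = ((1 - a + s - 2 * (k+1)) * F + a + 2 * (k+1) - 1) / (F - 1)^+2 ->
  s * (Gm - k) / (Fm * Gm - Gm + k) =
  - (s * (G - (k+1)) / (F * G - G + (k+1))) - s
  + (- (k+1)) / ((F - 1) * (F * G - G + (k + 1)) / (s * F))
  + (1 - a - (k+1)) / ((F - 1) * (F * G - G + (k + 1)) / (s * F) - 1).
Proof.
move=> s0 F0 F1 Fm0 Gm0 G0 D1 D0 Q0 Q1 h1 h2.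
have eG : G = ((1 - a + s - 2 * (k+1)) * F + a + 2 * (k+1) - 1) / (F - 1)^+2 - Gm.
  by rewrite -h2 addrC addKr.
have eFm : Fm = (Gm^+2 - (a + 2 * k) * Gm + (a + k) * k) / Gm^+2 / F.
  by rewrite -h1 [F * Fm]mulrC mulfK.
have F10 : F - 1 != 0 by rewrite subr_eq0.
have hQ1 : (F - 1) * (F * G - G + (k + 1)) - s * F != 0.
  move: Q1; apply: contra => /eqP h; apply/eqP.
  have -> : (F - 1) * (F * G - G + (k + 1)) = (F - 1) * (F * G - G + (k + 1)) - s * F + s * F by rewrite subrK.
  by rewrite h add0r mulfV // mulf_neq0.
have hE : Gm ^+ 2 - (a + 2 * k) * Gm + (a + k) * k = F * Fm * Gm ^+ 2.
  by rewrite h1 divfK // expf_neq0.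
rewrite eFm.
rewrite eG.
field.
apply/andP; split=> //; apply/andP; split=> //; apply/andP; split=> //.
apply/andP; split.
  apply: (@neq0_eq _ _ ((F - 1) * ((F - 1) * (F * G - G + (k + 1)) - s * F))).
    by rewrite mulf_neq0 // expf_neq0.
  by rewrite eG; field.
apply/andP; split.
  apply: (@neq0_eq _ _ ((F - 1) ^+ 2 * (F * G - G + (k + 1)))).
    by rewrite mulf_neq0 // expf_neq0.
  by rewrite eG; field.
apply/andP; split=> //.
apply: (@neq0_eq _ _ (F * Gm * (Fm * Gm - Gm + k))).
  by rewrite !mulf_neq0.
by rewrite hE; ring.
Qed.


Section D.
Variable R : realType.
Local Notation C := (Cp R).
Implicit Types (f g : C -> C) (x df dg : C).

Lemma dM f g x df dg : is_derive x 1 f df -> is_derive x 1 g dg ->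
  is_derive x 1 (fun t => f t * g t) (f x * dg + g x * df).
Proof. move=> hf hg; exact: (is_deriveM hf hg). Qed.

Lemma dD f g x df dg : is_derive x 1 f df -> is_derive x 1 g dg ->
  is_derive x 1 (fun t => f t + g t) (df + dg).
Proof. move=> hf hg; exact: (is_deriveD hf hg). Qed.

Lemma dB f g x df dg : is_derive x 1 f df -> is_derive x 1 g dg ->
  is_derive x 1 (fun t => f t - g t) (df - dg).
Proof. move=> hf hg; exact: (is_deriveB hf hg). Qed.

Lemma dC (c : C) x : is_derive x 1 (fun _ => c) 0.
Proof. exact: is_derive_cst. Qed.

Lemma dI x : is_derive x 1 (fun t : C => t) 1.
Proof. exact: is_derive_id. Qed.

Lemma dV f x df : is_derive x 1 f df -> f x != 0 ->
  is_derive x 1 (fun t => (f t)^-1) (- (f x) ^- 2 * df).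
Proof.
move=> hf fx0; have fd : derivable f x 1 by case: hf.
apply: DeriveDef; first exact: derivableV.
by rewrite deriveV // (@derive_val _ _ _ _ _ _ _ hf).
Qed.
End D.
Arguments dM {R f g x df dg}.
Arguments dD {R f g x df dg}.
Arguments dB {R f g x df dg}.
Arguments dC {R} c x.
Arguments dI {R} x.
Arguments dV {R f x df}.

Lemma diffpart (R : realType) (alpha : Cp R) :
  (forall (n : nat) (f g : Cp R -> Cp R) (s df dg : Cp R),
    s != 0 -> f s != 0 -> f s * g s - g s + n%:R != 0 ->
    is_derive s 1 f df -> is_derive s 1 g dg ->
    df = (2 * f s ^+ 2 * g s - 4 * f s * g s + (alpha - s + 2 * n%:R) * f s
          + 2 * g s - alpha - 2 * n%:R) / s ->
    dg = (g s ^+ 2 * (1 - f s ^+ 2) - (alpha + 2 * n%:R) * g s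
          + (alpha + n%:R) * n%:R) / (s * f s) ->
    let q := qv n s (f s) (g s) in
    let p := pv n s (f s) (g s) in
    is_derive s 1 (fun t => qv n t (f t) (g t))
      ((q * (q - 1) * (2 * p + s) - @a1 R n * (q - 1) - a3 alpha n * q) / s) /\
    is_derive s 1 (fun t => pv n t (f t) (g t))
      ((p * (p + s) * (1 - 2 * q) + (@a1 R n + a3 alpha n) * p - @a2 R n * s) / s)).
Proof.
move=> n f g s df dg s0 f0 D0 hf hg edf edg q p.
have sf0 : s * f s != 0 by rewrite mulf_neq0.
split.
  have H := dM (dM (dB hf (dC 1 s)) (dD (dB (dM hf hg) hg) (dC n%:R s)))
              (dV (dM (dI s) hf) sf0).
  apply: (is_derive_eq H).
  rewrite /q /p /qv /pv /a1 /a3 edf edg.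
  field.
  by rewrite D0 s0 f0.
have H := dM (dM (dI s) (dB hg (dC n%:R s)))
            (dV (dD (dB (dM hf hg) hg) (dC n%:R s)) D0).
apply: (is_derive_eq H).
rewrite /q /p /qv /pv /a1 /a2 /a3 edf edg.
field.
by rewrite D0 s0 f0.
Qed.

Theorem proposition4p11 (R : realType) (alpha : Cp R) :
  (* discrete part: s fixed, sequences f_n, g_n *)
  (forall (s : Cp R) (f g : nat -> Cp R),
    s != 0 ->
    (forall n, f n != 0) -> (forall n, f n != 1) -> (forall n, g n != 0) ->
    (forall n, f n * g n - g n + n%:R != 0) ->
    (forall n, pv n s (f n) (g n) != 0) ->
    (forall n, pv n s (f n) (g n) + s != 0) ->
    (forall n, qv n s (f n) (g n) != 0) ->
    (forall n, qv n s (f n) (g n) != 1) ->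
    (forall n, f n.+1 * f n =
       (g n ^+ 2 - (alpha + 2 * n%:R) * g n + (alpha + n%:R) * n%:R) / g n ^+ 2) ->
    (forall n, (0 < n)%N ->
       g n.-1 + g n =
       ((1 - alpha + s - 2 * n%:R) * f n + alpha + 2 * n%:R - 1) / (f n - 1) ^+ 2) ->
    (forall n,
       qv n.+1 s (f n.+1) (g n.+1) =
       1 - qv n s (f n) (g n) - a0 alpha n / (pv n s (f n) (g n) + s)
         - @a2 R n / pv n s (f n) (g n)) /\
    (forall n, (0 < n)%N ->
       pv n.-1 s (f n.-1) (g n.-1) =
       - pv n s (f n) (g n) - s + @a1 R n / qv n s (f n) (g n)
         + a3 alpha n / (qv n s (f n) (g n) - 1)))
  /\
  (* differential part: n fixed, f, g functions of s *)
  (forall (n : nat) (f g : Cp R -> Cp R) (s df dg : Cp R),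
    s != 0 -> f s != 0 -> f s * g s - g s + n%:R != 0 ->
    is_derive s 1 f df -> is_derive s 1 g dg ->
    df = (2 * f s ^+ 2 * g s - 4 * f s * g s + (alpha - s + 2 * n%:R) * f s
          + 2 * g s - alpha - 2 * n%:R) / s ->
    dg = (g s ^+ 2 * (1 - f s ^+ 2) - (alpha + 2 * n%:R) * g s
          + (alpha + n%:R) * n%:R) / (s * f s) ->
    let q := qv n s (f s) (g s) in
    let p := pv n s (f s) (g s) in
    is_derive s 1 (fun t => qv n t (f t) (g t))
      ((q * (q - 1) * (2 * p + s) - @a1 R n * (q - 1) - a3 alpha n * q) / s) /\
    is_derive s 1 (fun t => pv n t (f t) (g t))
      ((p * (p + s) * (1 - 2 * q) + (@a1 R n + a3 alpha n) * p - @a2 R n * s) / s)).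
Proof.
split; last exact: diffpart.
move=> s f g s0 hf0 hf1 hg0 hD hP hPs hQ0 hQ1 h1 h2; split.
  move=> n.
  have h2' := h2 n.+1 (ltn0Sn n); rewrite /= -[n.+1%:R](@natr1 _ n) in h2'.
  rewrite /qv /pv /a0 /a2 -[n.+1%:R](@natr1 _ n).
  exact: (fwd (Cp R) alpha s n%:R (f n) (g n) (f n.+1) (g n.+1) s0 (hf0 n) (hg0 n) (hf0 n.+1) (hf1 n.+1) (hD n) (hP n) (hPs n) (h1 n) h2').
case=> // m _ /=.
have h2' := h2 m.+1 (ltn0Sn m); rewrite /= -[m.+1%:R](@natr1 _ m) in h2'.
have D1 := hD m.+1; rewrite -[m.+1%:R](@natr1 _ m) in D1.
have Q0 := hQ0 m.+1; rewrite /qv -[m.+1%:R](@natr1 _ m) in Q0.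
have Q1 := hQ1 m.+1; rewrite /qv -[m.+1%:R](@natr1 _ m) in Q1.
rewrite /qv /pv /a1 /a3 -[m.+1%:R](@natr1 _ m).
exact: (bwd (Cp R) alpha s m%:R (f m.+1) (g m.+1) (f m) (g m) s0 (hf0 m.+1) (hf1 m.+1) (hf0 m) (hg0 m) (hg0 m.+1) D1 (hD m) Q0 Q1 (h1 m) h2').
Qed.
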